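(* Let $d\in\mathbb{N}$, let $D_d\subset\mathbb{R}^d$ be bounded with Lebesgue measure $\lambda_d(D_d)=1$, and let $R_d=\operatorname{rad}(D_d)/\sqrt{d}$. Let $K$ be the convex hull of $n$ points $x_1,\dots,x_n\in D_d$ and let $\delta>0$. Then \[ \lambda_d(K_\delta) \,<\, n\, \Bigl((R_d + 2\delta) \sqrt{\tfrac{\pi e}{2}} \Bigr)^d . \]
   Context: For $A\subset\mathbb{R}^d$ and $\delta>0$, $A_\delta=\{x\in\mathbb{R}^d \mid \operatorname{dist}(x,A)\le \delta\sqrt{d}\}$, where $\operatorname{dist}(x,A)=\inf_{a\in A}\|x-a\|_2$. The radius of a set $D\subset\mathbb{R}^d$ is $\operatorname{rad}(D)=\inf_{x\in\mathbb{R}^d}\sup_{y\in D}\|y-x\|_2$. $\lambda_d$ denotes $d$-dimensional Lebesgue measure. *)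

(* Defs.v *)
From HB Require Import structures.
From mathcomp Require Import all_boot all_order all_algebra.
From mathcomp Require Import all_classical all_reals all_analysis.
Set Implicit Arguments. Unset Strict Implicit. Unset Printing Implicit Defensive.
Import Order.TTheory GRing.Theory Num.Theory.
Local Open Scope classical_set_scope.
Local Open Scope ring_scope.

Section defs.
Variables (R : realType) (d : nat).

Definition enorm (v : 'rV[R]_d) : R := Num.sqrt (\sum_(i < d) v ord0 i ^+ 2).

Definition box (a b : 'rV[R]_d) : set 'rV[R]_d :=
  [set x | forall i, a ord0 i <= x ord0 i <= b ord0 i].
Definition box_vol (a b : 'rV[R]_d) : R := \prod_(i < d) (b ord0 i - a ord0 i).

(* d-dimensional Lebesgue (outer) measure: infimum of the total volume of
   countable covers by closed boxes. On Lebesgue measurable sets this is the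
   Lebesgue measure lambda_d. *)
Definition leb_outer (A : set 'rV[R]_d) : \bar R :=
  ereal_inf [set s : \bar R | exists (a b : nat -> 'rV[R]_d),
     [/\ (forall k i, a k ord0 i <= b k ord0 i),
         A `<=` \bigcup_k box (a k) (b k) &
         s = (\sum_(0 <= k <oo) (box_vol (a k) (b k))%:E)%E]].

(* dist(x,A) = inf_{a in A} |x - a|  (extended real; +oo if A is empty) *)
Definition edist (x : 'rV[R]_d) (A : set 'rV[R]_d) : \bar R :=
  ereal_inf [set (enorm (x - a))%:E | a in A].

Definition thicken (A : set 'rV[R]_d) (delta : R) : set 'rV[R]_d :=
  [set x | (edist x A <= (delta * Num.sqrt d%:R)%:E)%E].

Definition set_radius (D : set 'rV[R]_d) : \bar R :=
  ereal_inf [set ereal_sup [set (enorm (y - x))%:E | y in D] | x in setT].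

Definition bounded_setE (D : set 'rV[R]_d) : Prop :=
  exists M : R, forall y, D y -> enorm y <= M.

Definition conv_hull (n : nat) (x : 'I_n -> 'rV[R]_d) : set 'rV[R]_d :=
  [set y | exists w : 'I_n -> R, [/\ (forall i, 0 <= w i),
       \sum_(i < n) w i = 1 & y = \sum_(i < n) w i *: x i]].
End defs.

(* Main.v *)
Require Import Defs.
From HB Require Import structures.
From mathcomp Require Import all_boot all_order all_algebra.
From mathcomp Require Import all_classical all_reals all_analysis.
From mathcomp Require Import ring lra zify measurable_realfun.
Import Order.TTheory GRing.Theory Num.Theory.
Local Open Scope classical_set_scope.
Local Open Scope ring_scope.
Set Implicit Arguments. Unset Strict Implicit. Unset Printing Implicit Defensive.
Section enorm_lemmas.
Variables (R : realType) (d : nat).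
Implicit Types u v p q : 'rV[R]_d.

Definition sq v : R := \sum_(i < d) v ord0 i ^+ 2.
Definition dot u v : R := \sum_(i < d) u ord0 i * v ord0 i.

Lemma sq_ge0 v : 0 <= sq v.
Proof. by apply: sumr_ge0 => i _; exact: sqr_ge0. Qed.

Lemma enorm_ge0 v : 0 <= enorm v.
Proof. exact: sqrtr_ge0. Qed.

Lemma enorm_sq v : enorm v ^+ 2 = sq v.
Proof. by rewrite /enorm sqr_sqrtr // sq_ge0. Qed.

Lemma enorm_le v a : 0 <= a -> sq v <= a ^+ 2 -> enorm v <= a.
Proof.
move=> a0 h; rewrite /enorm -[X in _ <= X](ger0_norm a0) -sqrtr_sqr.
by rewrite ler_sqrt // ?sqr_ge0.
Qed.

Lemma sq_le v a : enorm v <= a -> sq v <= a ^+ 2.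
Proof.
move=> h; rewrite -enorm_sq; apply: lerXn2r => //; rewrite ?nnegrE ?enorm_ge0 //.
exact: le_trans (enorm_ge0 v) h.
Qed.

Lemma CS u v : dot u v ^+ 2 <= sq u * sq v.
Proof.
set a := fun i => u ord0 i; set b := fun i => v ord0 i.
have E : \sum_(i < d) \sum_(j < d) (a i * b j - a j * b i) ^+ 2 =
         2 * (sq u * sq v - dot u v ^+ 2).
  transitivity (\sum_(i < d) \sum_(j < d)
     ((a i ^+ 2 * b j ^+ 2 + b i ^+ 2 * a j ^+ 2) - 2 * ((a i * b i) * (a j * b j)))).
    by apply: eq_bigr => i _; apply: eq_bigr => j _; ring.
  under eq_bigr do rewrite sumrB big_split /= -!mulr_sumr.
  rewrite sumrB big_split /= -!mulr_suml -mulr_sumr -mulr_suml.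
  rewrite /sq /dot -/a -/b; ring.
have : 0 <= 2 * (sq u * sq v - dot u v ^+ 2).
  by rewrite -E; apply: sumr_ge0 => i _; apply: sumr_ge0 => j _; exact: sqr_ge0.
by rewrite pmulr_rge0 // subr_ge0.
Qed.

Lemma sqD u v : sq (u + v) = sq u + 2 * dot u v + sq v.
Proof.
rewrite /sq /dot mulr_sumr -!big_split /=; apply: eq_bigr => i _.
rewrite mxE; ring.
Qed.

Lemma enormD u v : enorm (u + v) <= enorm u + enorm v.
Proof.
have hd : dot u v <= enorm u * enorm v.
  have h := CS u v.
  rewrite -(ger0_norm (enorm_ge0 u)) -(ger0_norm (enorm_ge0 v)) -normrM.
  apply: le_trans (ler_norm _) _.
  rewrite -ler_sqr ?nnegrE ?normr_ge0 //.
  by rewrite !real_normK ?num_real // exprMn !enorm_sq.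
apply: enorm_le; first by rewrite addr_ge0 // enorm_ge0.
rewrite sqD sqrrD !enorm_sq mulr2n; lra.
Qed.

Lemma sqN v : sq (- v) = sq v.
Proof. by apply: eq_bigr => i _; rewrite mxE sqrrN. Qed.

Lemma enormN v : enorm (- v) = enorm v.
Proof. by rewrite /enorm -/(sq _) sqN. Qed.

Lemma enormB u v : enorm (u - v) = enorm (v - u).
Proof. by rewrite -enormN opprB. Qed.

End enorm_lemmas.
Section elekes.
Variables (R : realType) (d : nat).
Implicit Types u v p q : 'rV[R]_d.

Lemma dot_sum n (p : 'rV[R]_d) (w : 'I_n -> R) (q : 'I_n -> 'rV[R]_d) :
  dot p (\sum_i w i *: q i) = \sum_i w i * dot p (q i).
Proof.
rewrite /dot; under eq_bigr do rewrite summxE mulr_sumr.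
rewrite exchange_big /=; apply: eq_bigr => i _; rewrite mulr_sumr.
by apply: eq_bigr => j _; rewrite mxE mulrCA.
Qed.

Lemma sq_dot v : sq v = dot v v.
Proof. by apply: eq_bigr => i _; rewrite expr2. Qed.

Lemma sq_half p q : sq (p - 2^-1 *: q) = sq p - dot p q + sq q / 4.
Proof.
rewrite /sq /dot -sumrB mulr_suml -big_split /=; apply: eq_bigr => i _.
by rewrite !mxE; field.
Qed.

Lemma elekes n (x : 'I_n -> 'rV[R]_d) (c : 'rV[R]_d) (r : R) (w : 'I_n -> R) :
  (0 < n)%N -> (forall i, 0 <= w i) -> \sum_i w i = 1 ->
  (forall i, enorm (x i - c) <= r) ->
  exists i, enorm (\sum_i w i *: x i - 2^-1 *: (c + x i)) <= r / 2.
Proof.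
move=> n0 w0 w1 hx.
have r0 : 0 <= r by apply: le_trans (hx (Ordinal n0)); exact: enorm_ge0.
set q := fun i => x i - c.
set p := \sum_i w i *: q i.
have yE : \sum_i w i *: x i = c + p.
  rewrite /p /q; apply/rowP => j; rewrite !(mxE, summxE).
  under eq_bigr do rewrite mxE.
  under [X in _ = _ + X]eq_bigr do rewrite mxE mxE mxE mulrBr.
  by rewrite sumrB -mulr_suml w1 mul1r addrC subrK.
set a := fun i => dot p (q i).
have [i _ imax] := @arg_maxP _ _ _ (Ordinal n0) predT a isT.
exists i.
have -> : \sum_i w i *: x i - 2^-1 *: (c + x i) = p - 2^-1 *: q i.
  rewrite yE /q; apply/rowP => j; rewrite !mxE; lra.
apply: enorm_le; first by rewrite divr_ge0.
rewrite sq_half.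
have hp : sq p <= a i.
  rewrite sq_dot {2}/p dot_sum.
  apply: le_trans (_ : \sum_j w j * a i <= _); last by rewrite -mulr_suml w1 mul1r.
  by apply: ler_sum => j _; apply: ler_wpM2l => //; exact: imax.
have hq : sq (q i) <= r ^+ 2 by apply: sq_le; exact: hx.
rewrite -/(a i); have := sq_ge0 p; lra.
Qed.
End elekes.
Section gauss_bound.
Variable R : realType.
Let mu := @lebesgue_measure R.

Lemma gauss_anti (x y : R) : 0 <= x -> x <= y -> gauss_fun y <= gauss_fun x.
Proof.
move=> x0 xy; rewrite /gauss_fun ler_expR lerN2.
by rewrite lerXn2r // ?nnegrE //; apply: le_trans xy.
Qed.

Lemma mgauss (D : set R) : measurable_fun D (EFin \o (@gauss_fun R)).
Proof.
apply/measurable_EFinP; apply: measurable_funS (@measurable_gauss_fun R) => //.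
Qed.

Lemma gauss_itv (a b : R) : 0 <= a -> a <= b ->
  (((b - a) * gauss_fun b)%:E <= \int[mu]_(x in `]a, b]) (gauss_fun x)%:E)%E.
Proof.
move=> a0 ab.
apply: (@le_trans _ _ (\int[mu]_(x in `]a, b]) (cst (gauss_fun b)%:E x))%E).
  rewrite integral_cst //= /mu lebesgue_measure_itv /= lte_fin.
  case: ltP => h; first by rewrite -EFinD -EFinM mulrC.
  by rewrite mule0 (_ : b - a = 0) ?mul0r //; apply/eqP; rewrite subr_eq0 eq_le ab h.
apply: ge0_le_integral => //.
- by move=> x _; rewrite lee_fin gauss_fun_ge0.
- by apply/measurable_EFinP/measurable_funTS; exact: measurable_gauss_fun.
move=> x /=; rewrite in_itv /= => /andP[ax xb]; rewrite lee_fin.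
by apply: gauss_anti => //; apply: le_trans (ltW ax).
Qed.


Lemma disj_itv (a b c : R) :
  [disjoint `[0, b] & `]b, c]]%classic.
Proof.
apply/disj_setPS => x [] /=; rewrite !in_itv /= => /andP[_ xb] /andP[bx _].
by move: (lt_le_trans bx xb); rewrite ltxx.
Qed.

Lemma gauss_sum (s : R) (K : nat) : 0 < s ->
  ((\sum_(j < K) s * gauss_fun (j.+1%:R * s))%:E <=
   \int[mu]_(x in `[0%R, (K%:R * s)%R]) (gauss_fun x)%:E)%E.
Proof.
move=> s0; elim: K => [|K IH].
  by rewrite big_ord0; apply: integral_ge0 => x _; rewrite lee_fin gauss_fun_ge0.
have KS : 0 <= K%:R * s by rewrite mulr_ge0 // ltW.
rewrite big_ord_recr /= EFinD.
rewrite (@itv_bndbnd_setU _ _ (BLeft 0) (BRight (K%:R * s)) (BRight (K.+1%:R * s))); last 2 first.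
- by rewrite bnd_simp.
- by rewrite bnd_simp ler_pM2r // ler_nat.
rewrite ge0_integral_setU //=.
- apply: leeD => //.
  have := @gauss_itv (K%:R * s) (K.+1%:R * s) KS.
  rewrite ler_pM2r // ler_nat leqnSn => /(_ isT).
  by rewrite -mulrBl -natrB // subSnn mul1r.
- by apply/measurable_EFinP/measurable_funTS; exact: measurable_gauss_fun.
- by move=> x _; rewrite lee_fin gauss_fun_ge0.
- exact: disj_itv.
Qed.

Lemma gauss_total (s : R) (K : nat) : 0 < s ->
  \sum_(j < K) s * gauss_fun (j.+1%:R * s) + gauss_fun (K%:R * s + 1)
   <= Num.sqrt pi / 2.
Proof.
move=> s0.
have KS : 0 <= K%:R * s by rewrite mulr_ge0 // ltW.
rewrite -lee_fin -integral0y_gauss EFinD.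
apply: (@le_trans _ _ (\int[mu]_(x in `[0%R, (K%:R * s)%R] `|` `](K%:R * s)%R, (K%:R * s + 1)%R])
   (gauss_fun x)%:E)%E).
  rewrite ge0_integral_setU //=.
  - apply: leeD; first exact: gauss_sum.
    have := @gauss_itv (K%:R * s) (K%:R * s + 1) KS.
    by rewrite lerDl ler01 addrAC subrr add0r mul1r => /(_ isT).
  - by apply/measurable_EFinP/measurable_funTS; exact: measurable_gauss_fun.
  - by move=> x _; rewrite lee_fin gauss_fun_ge0.
  - exact: disj_itv.
apply: ge0_subset_integral => //=.
- by apply: measurableU.
- by apply/measurable_EFinP/measurable_funTS; exact: measurable_gauss_fun.
- by move=> x _; rewrite lee_fin gauss_fun_ge0.
move=> x [] /=; rewrite !in_itv /= ?andbT.
  by case/andP.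
by case/andP=> h _; apply: le_trans (ltW h).
Qed.

End gauss_bound.

Section grid.
Variables (R : realType) (d : nat).

Definition goff N (k : 'I_(N + N)) : R := k%:R - N%:R.
Definition gw N (k : 'I_(N + N)) : R :=
  if (N <= k)%N then k%:R - N%:R else k%:R - N%:R + 1.

Lemma gauss_even (x : R) : gauss_fun (- x) = gauss_fun x.
Proof. by rewrite /gauss_fun sqrrN. Qed.

Lemma sum_gw N (s : R) :
  \sum_(k < N + N) gauss_fun (s * gw k) = 2 * \sum_(j < N) gauss_fun (s * j%:R).
Proof.
rewrite big_split_ord /= mulr2n mulrDl mul1r; congr (_ + _).
  rewrite (reindex_inj rev_ord_inj) /=; apply: eq_bigr => i _.
  have hi : (i < N)%N := ltn_ord i.
  rewrite /gw /= ifF; last by apply/negbTE; rewrite -ltnNge; lia.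
  rewrite -gauss_even; congr gauss_fun.
  rewrite natrB; last by lia.
  rewrite -natr1; ring.
apply: eq_bigr => i _; rewrite /gw /= leq_addr natrD; congr gauss_fun; ring.
Qed.


Lemma oneD_bound (s t rho : R) (K : nat) : 0 < s -> 0 < t ->
  K%:R * (s / Num.sqrt t) <= rho ->
  (s / Num.sqrt t) * \sum_(k < K.+1 + K.+1) expR (- t * ((s / Num.sqrt t) * gw k) ^+ 2)
  <= (Num.sqrt pi + 2 * s - 2 * gauss_fun (Num.sqrt t * rho + 1)) / Num.sqrt t.
Proof.
move=> s0 t0 hK.
have st0 : 0 < Num.sqrt t by rewrite sqrtr_gt0.
have E k : expR (- t * ((s / Num.sqrt t) * gw k) ^+ 2) = gauss_fun (s * gw k).
  rewrite /gauss_fun; congr expR.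
  rewrite !exprMn exprVn sqr_sqrtr ?ltW //; field; rewrite gt_eqF // sqrtr_gt0.
under eq_bigr do rewrite E.
rewrite sum_gw big_ord_recl /= mulr0 /gauss_fun expr0n /= oppr0 expR0 -/(gauss_fun _).
set S := \sum_(i < K) _.
have hS : s * S + gauss_fun (K%:R * s + 1) <= Num.sqrt pi / 2.
  rewrite /S mulr_sumr.
  apply: le_trans (gauss_total K s0); rewrite lerD2r le_eqVlt; apply/orP; left.
  by apply/eqP; apply: eq_bigr => i _; rewrite /gauss_fun /bump /= add1n (mulrC s i.+1%:R).
have hG : gauss_fun (Num.sqrt t * rho + 1) <= gauss_fun (K%:R * s + 1).
  apply: gauss_anti; first by rewrite addr_ge0 // mulr_ge0 // ltW.
  rewrite lerD2r.
  by move: hK; rewrite mulrA ler_pdivrMr // (mulrC rho).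
rewrite mulrAC ler_pM2r ?invr_gt0 //.
have := sqrtr_ge0 pi.
nra.
Qed.

End grid.
Section grid2.
Variables (R : realType) (d : nat).

Definition glo (m : 'rV[R]_d) (h : R) N (z : {ffun 'I_d -> 'I_(N + N)}) : 'rV[R]_d :=
  \row_j (m ord0 j + h * goff R (z j)).
Definition ghi (m : 'rV[R]_d) (h : R) N (z : {ffun 'I_d -> 'I_(N + N)}) : 'rV[R]_d :=
  \row_j (m ord0 j + h * (goff R (z j) + 1)).
Definition gincl (h rho : R) N (z : {ffun 'I_d -> 'I_(N + N)}) : bool :=
  \sum_j (h * gw R (z j)) ^+ 2 <= rho ^+ 2.

Lemma grid_cover (m : 'rV[R]_d) (rho h : R) N : 0 < h -> rho < N%:R * h ->
  forall x, enorm (x - m) <= rho ->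
  exists z : {ffun 'I_d -> 'I_(N + N)}, gincl h rho z /\ box (glo m h z) (ghi m h z) x.
Proof.
move=> h0 hN x hx.
have hs := sq_le hx.
have rho0 : 0 <= rho by apply: le_trans hx; exact: enorm_ge0.
have coord j : (x - m) ord0 j ^+ 2 <= rho ^+ 2.
  apply: le_trans hs; rewrite /sq (bigD1 j) //= lerDl.
  by apply: sumr_ge0 => i _; exact: sqr_ge0.
have hk j : exists k : 'I_(N + N),
   (goff R k * h <= x ord0 j - m ord0 j <= (goff R k + 1) * h) /\
   (h * gw R k) ^+ 2 <= (x ord0 j - m ord0 j) ^+ 2.
  have := coord j; rewrite !mxE; set v := x ord0 j - m ord0 j => hv.
  have hav : `|v| <= rho.
    by rewrite -ler_sqr ?nnegrE ?normr_ge0 // real_normK ?num_real.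
  move: hav; rewrite ler_norml => /andP[vlo vhi].
  set q := v / h + N%:R.
  have hrho : rho / h < N%:R by rewrite ltr_pdivrMr.
  have q0 : 0 <= q.
    rewrite /q; have : - rho / h <= v / h by rewrite ler_pM2r ?invr_gt0.
    rewrite mulNr; lra.
  have qlt : q < (N + N)%:R.
    rewrite /q natrD; have : v / h <= rho / h by rewrite ler_pM2r ?invr_gt0.
    lra.
  have /andP[t1 t2] := truncn_itv q0.
  have tlt : (Num.trunc q < N + N)%N by rewrite truncn_lt_nat.
  exists (Ordinal tlt).
  have vq : v = (q - N%:R) * h by rewrite /q addrK mulfVK // gt_eqF.
  rewrite /goff /gw /=.
  have e1 : (Num.trunc q).+1%:R = (Num.trunc q)%:R + 1 :> R by rewrite -natr1.
  rewrite e1 in t2.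
  split.
    apply/andP; split; rewrite vq ler_pM2r //; lra.
  case: ifP => hN'.
    have : (N%:R <= (Num.trunc q)%:R :> R) by rewrite ler_nat.
    move=> hNq.
    have a0 : 0 <= h * ((Num.trunc q)%:R - N%:R) by apply: mulr_ge0; [exact: ltW | rewrite subr_ge0].
    have a1 : h * ((Num.trunc q)%:R - N%:R) <= v by rewrite vq mulrC ler_pM2r //; lra.
    nra.
  have : ((Num.trunc q)%:R + 1 <= N%:R :> R).
    by rewrite natr1 ler_nat; move/negbT: hN'; rewrite -ltnNge.
  move=> hNq.
  have a0 : h * ((Num.trunc q)%:R - N%:R + 1) <= 0.
    by apply: mulr_ge0_le0; [exact: ltW | lra].
  have a1 : v <= h * ((Num.trunc q)%:R - N%:R + 1) by rewrite vq (mulrC h) ler_pM2r //; lra.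
  nra.
have [f hf] := fin_all_exists hk.
exists [ffun j => f j]; split.
  rewrite /gincl; apply: le_trans hs; rewrite /sq; apply: ler_sum => j _.
  rewrite ffunE !mxE; case: (hf j) => _ H; exact H.
move=> j; rewrite !mxE ffunE; case: (hf j) => /andP[a b] _.
rewrite -lerBlDl -lerBrDl; rewrite !(mulrC h); lra.
Qed.


Lemma expR_sum_ord (F : 'I_d -> R) : \prod_j expR (F j) = expR (\sum_j F j).
Proof.
elim/big_rec2: _ => [|j y1 y2 _ ->]; first by rewrite expR0.
by rewrite expRD.
Qed.

Lemma grid_count (rho h t : R) N : 0 <= t -> t * rho ^+ 2 = d%:R / 2 -> 0 <= h ->
  \sum_(z : {ffun 'I_d -> 'I_(N + N)} | gincl h rho z) h ^+ d <=
  (expR (2^-1) * (h * \sum_(k < N + N) expR (- t * (h * gw R k) ^+ 2))) ^+ d.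
Proof.
move=> t0 trho h0.
have -> : (expR (2^-1) * (h * \sum_(k < N + N) expR (- t * (h * gw R k) ^+ 2))) ^+ d =
   \prod_(j < d) \sum_(k < N + N) (h * expR (2^-1 - t * (h * gw R k) ^+ 2)).
  rewrite prodr_const card_ord; congr (_ ^+ _).
  rewrite mulr_sumr mulr_sumr; apply: eq_bigr => k _.
  by rewrite mulrCA expRD mulNr.
rewrite bigA_distr_bigA /= big_mkcond /=.
apply: ler_sum => z _; case: ifP => hz; last first.
  by apply: prodr_ge0 => j _; rewrite mulr_ge0 // expR_ge0.
rewrite big_split /= prodr_const card_ord expR_sum_ord.
rewrite -[leLHS]mulr1 ler_wpM2l ?exprn_ge0 //.
apply: le_trans (expR_ge1Dx _); rewrite lerDl.
rewrite sumrB sumr_const card_ord -mulr_sumr subr_ge0.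
move: hz; rewrite /gincl => hz.
have := ler_wpM2l t0 hz; rewrite trho => H.
apply: le_trans H _.
by rewrite -[2^-1 *+ d]mulr_natr mulrC.
Qed.


Definition gam : R := gauss_fun (Num.sqrt (d%:R / 2) + 1).
Definition bc : R := expR (2^-1) * (Num.sqrt pi - gam) / Num.sqrt (d%:R / 2).

Lemma gam_gt0 : 0 < gam.
Proof. exact: expR_gt0. Qed.

Lemma gam_le1 : gam <= 1.
Proof. exact: gauss_fun_le1. Qed.

Lemma ball_cover (m : 'rV[R]_d) (rho : R) : (0 < d)%N -> 0 < rho ->
  exists s : seq ('rV[R]_d * 'rV[R]_d),
  [/\ (forall p, p \in s -> forall j, p.1 ord0 j <= p.2 ord0 j),
      (forall x, enorm (x - m) <= rho -> exists2 p, p \in s & box p.1 p.2 x) &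
      \sum_(p <- s) box_vol p.1 p.2 <= (bc * rho) ^+ d ].
Proof.
move=> d0 rho0.
have dh0 : 0 < Num.sqrt (d%:R / 2 : R) by rewrite sqrtr_gt0 divr_gt0 // ltr0n.
set st := Num.sqrt (d%:R / 2 : R) / rho.
have st0 : 0 < st by rewrite divr_gt0.
set t := st ^+ 2.
have t0 : 0 < t by rewrite exprn_gt0.
have sqt : Num.sqrt t = st by rewrite sqrtr_sqr ger0_norm // ltW.
have trho : t * rho ^+ 2 = d%:R / 2.
  rewrite /t /st exprMn exprVn sqr_sqrtr ?divr_ge0 ?ler0n //.
  by rewrite mulrVK // unitfE sqrf_eq0 gt_eqF.
set s0 := gam / 2.
have s00 : 0 < s0 by rewrite divr_gt0 // gam_gt0.
set h := s0 / Num.sqrt t.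
have h0 : 0 < h by rewrite divr_gt0 // sqt.
set K := Num.trunc (rho / h).
have rh0 : 0 <= rho / h by rewrite divr_ge0 // ltW.
have /andP[K1 K2] := truncn_itv rh0.
have hK : K%:R * h <= rho by rewrite -ler_pdivlMr.
have hN : rho < K.+1%:R * h by rewrite -ltr_pdivrMr.
pose s := [seq (glo m h z, ghi m h z) | z <- enum [pred z : {ffun 'I_d -> 'I_(K.+1 + K.+1)} | gincl h rho z]].
exists s; split.
- move=> p /mapP[z _ ->] j /=; rewrite !mxE lerD2l ler_pM2l //; lra.
- move=> x hx; have [z [hz hb]] := grid_cover h0 hN hx.
  exists (glo m h z, ghi m h z) => //.
  by apply: map_f; rewrite mem_enum inE.
rewrite big_map big_enum /=.
have vol z : box_vol (glo m h z) (ghi m h z) = h ^+ d.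
  rewrite /box_vol (eq_bigr (fun _ => h)); first by rewrite prodr_const card_ord.
  by move=> j _; rewrite !mxE; ring.
under eq_bigr do rewrite vol.
have C := @grid_count rho h t K.+1 (ltW t0) trho (ltW h0).
apply: le_trans C _.
have D := @oneD_bound R s0 t rho K s00 t0 hK.
have e1 : Num.sqrt t * rho = Num.sqrt (d%:R / 2) by rewrite sqt /st divfK // gt_eqF.
rewrite e1 -/gam in D.
have e2 : 2 * s0 = gam by rewrite /s0 mulrC divfK.
have sum0 : 0 <= h * \sum_(k < K.+1 + K.+1) expR (- t * (h * gw R k) ^+ 2).
  by apply: mulr_ge0; [exact: ltW | apply: sumr_ge0 => k _; exact: expR_ge0].
rewrite -/h e2 (_ : Num.sqrt pi + gam - 2 * gam = Num.sqrt pi - gam) in D; last by lra.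
have e3 : bc * rho = expR 2^-1 * ((Num.sqrt pi - gam) / Num.sqrt t).
  rewrite /bc sqt /st; field; rewrite ?gt_eqF //.
rewrite e3; apply: lerXn2r.
- by rewrite nnegrE mulr_ge0 // expR_ge0.
- by rewrite nnegrE mulr_ge0 ?expR_ge0 //; apply: le_trans sum0 D.
by rewrite ler_wpM2l // expR_ge0.
Qed.

End grid2.
Section final_lemmas.
Variables (R : realType) (d : nat).

Lemma radius_approx (D : set 'rV[R]_d) (y0 : 'rV[R]_d) : D y0 -> bounded_setE D ->
  exists r : R, [/\ set_radius D = r%:E, 0 <= r &
    forall e, 0 < e -> exists c, forall y, D y -> enorm (y - c) <= r + e].
Proof.
move=> Dy0 [M hM].
have lb : lbound [set ereal_sup [set (enorm (y - x))%:E | y in D] | x in setT] 0%E.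
  move=> _ [x _ <-]; apply: le_ereal_sup_tmp.
  by exists (enorm (y0 - x))%:E; [exists y0 | rewrite lee_fin enorm_ge0].
have ub : (set_radius D <= M%:E)%E.
  apply: ge_ereal_inf; exists (ereal_sup [set (enorm (y - 0))%:E | y in D]).
    by exists 0.
  by apply: ge_ereal_sup => _ [y Dy <-]; rewrite lee_fin subr0; exact: hM.
have r0 : (0 <= set_radius D)%E by apply: le_ereal_inf_tmp.
have fr : set_radius D \is a fin_num by rewrite ge0_fin_numE // (le_lt_trans ub) ?ltry.
exists (fine (set_radius D)); split; first by rewrite fineK.
  by rewrite -lee_fin fineK.
move=> e e0.
have : (set_radius D < (fine (set_radius D) + e)%:E)%E.
  by rewrite -[X in (X < _)%E](fineK fr) lte_fin ltrDl.
move/ereal_inf_lt => [_ [c _ <-]] hc.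
exists c => y Dy; rewrite -lee_fin; apply: ltW; apply: le_lt_trans hc.
by apply: ereal_sup_ubound; exists y.
Qed.

Lemma thicken_approx (A : set 'rV[R]_d) (delta : R) z e : thicken A delta z -> 0 < e ->
  exists y, A y /\ enorm (z - y) <= delta * Num.sqrt d%:R + e.
Proof.
move=> hz e0.
have : (Defs.edist z A < ((delta * Num.sqrt d%:R + e)%R)%:E)%E.
  by apply: le_lt_trans hz _; rewrite lte_fin ltrDl.
move/ereal_inf_lt => [_ [y Ay <-]]; rewrite lte_fin => h.
by exists y; split => //; exact: ltW.
Qed.

Lemma box_vol0 : (0 < d)%N -> box_vol (0 : 'rV[R]_d) 0 = 0.
Proof.
move=> d0; rewrite /box_vol (eq_bigr (fun _ => 0)); last by move=> j _; rewrite !mxE subrr.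
by rewrite prodr_const card_ord expr0n /= gtn_eqF.
Qed.

Lemma leb_outer_seq (A : set 'rV[R]_d) (s : seq ('rV[R]_d * 'rV[R]_d)) : (0 < d)%N ->
  (forall p, p \in s -> forall j, p.1 ord0 j <= p.2 ord0 j) ->
  (forall x, A x -> exists2 p, p \in s & box p.1 p.2 x) ->
  (leb_outer A <= (\sum_(p <- s) box_vol p.1 p.2)%:E)%E.
Proof.
move=> d0 hs hA.
pose a k := (nth (0, 0) s k).1; pose b k := (nth (0, 0) s k).2.
have hab k j : a k ord0 j <= b k ord0 j.
  rewrite /a /b; case: (ltnP k (size s)) => hk; first by apply: hs; exact: mem_nth.
  by rewrite nth_default.
apply: ge_ereal_inf; exists (\sum_(0 <= k <oo) (box_vol (a k) (b k))%:E)%E.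
  exists a, b; split => //.
  move=> x Ax; have [p ps bx] := hA x Ax.
  by exists (index p s) => //; rewrite /a /b nth_index.
rewrite (nneseries_split 0 (size s)); last first.
  by move=> k _; rewrite lee_fin /box_vol; apply: prodr_ge0 => j _; rewrite subr_ge0.
rewrite eseries0; last first.
  move=> k; rewrite add0n => hk _.
  by rewrite /a /b nth_default // box_vol0.
rewrite adde0 sumEFin lee_fin (big_nth (0, 0)).
by rewrite add0n.
Qed.

End final_lemmas.
Section bc_section.
Variables (R : realType) (d : nat).

Lemma bc_lt : (0 < d)%N ->
  bc R d < 2 / Num.sqrt d%:R * Num.sqrt (pi * expR 1 / 2).
Proof.
move=> d0.
have g0 := @gam_gt0 R d; have g1 := @gam_le1 R d.
set g := gam R d in g0 g1 *.
set sp := Num.sqrt (pi : R).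
have sp1 : 1 < sp.
  rewrite /sp -sqrtr1 ltr_sqrt //; apply: lt_le_trans (pi_ge2 R); lra.
have dR : 0 < d%:R :> R by rewrite ltr0n.
have bc0 : 0 <= bc R d.
  rewrite /bc -/g -/sp; apply: mulr_ge0; last by rewrite invr_ge0 sqrtr_ge0.
  by apply: mulr_ge0; [exact: expR_ge0 | lra].
rewrite -ltr_sqr ?nnegrE //.
have e1 : expR (2^-1 : R) ^+ 2 = expR 1 by rewrite expr2 -expRD; congr expR; field.
have E1 : bc R d ^+ 2 = (2 * expR 1 / d%:R) * (sp - g) ^+ 2.
  rewrite /bc -/g -/sp !exprMn exprVn e1 sqr_sqrtr ?divr_ge0 ?ler0n //.
  by field; rewrite gt_eqF.
have E2 : (2 / Num.sqrt d%:R * Num.sqrt (pi * expR 1 / 2)) ^+ 2 =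
          (2 * expR 1 / d%:R) * sp ^+ 2.
  rewrite !exprMn exprVn !sqr_sqrtr ?ler0n ?pi_ge0 //; last first.
    by rewrite divr_ge0 // mulr_ge0 ?pi_ge0 ?expR_ge0.
  by field; rewrite gt_eqF.
rewrite E1 E2 ltr_pM2l; last by rewrite divr_gt0 ?mulr_gt0 ?expR_gt0.
nra.
Qed.

End bc_section.
Unset Implicit Arguments. Set Strict Implicit. Set Printing Implicit Defensive.

Theorem theorem2p1 (R : realType) (d n : nat) (D : set 'rV[R]_d)
  (x : 'I_n -> 'rV[R]_d) (delta : R) :
  (0 < d)%N -> (0 < n)%N ->
  bounded_setE D ->
  caratheodory_measurable (@leb_outer R d) D ->
  leb_outer D = 1%E ->
  (forall i, D (x i)) ->
  0 < delta ->
  (leb_outer (thicken (conv_hull x) delta) <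
   ((n%:R * (((fine (set_radius D) / Num.sqrt d%:R) + 2 * delta) *
             Num.sqrt (pi * expR 1 / 2)) ^+ d))%:E)%E.
Proof.
move=> d0 n0 hD _ _ hx delta0.
have [r [hr r0 happ]] := radius_approx (hx (Ordinal n0)) hD.
rewrite hr /=.
have sd0 : 0 < Num.sqrt d%:R :> R by rewrite sqrtr_gt0 ltr0n.
set rho0 := r / 2 + delta * Num.sqrt d%:R.
have rho00 : 0 < rho0 by rewrite /rho0; apply: ltr_wpDl; [exact: divr_ge0 | exact: mulr_gt0].
pose C : R := 2 / Num.sqrt d%:R * Num.sqrt (pi * expR 1 / 2).
have hbc : bc R d < C := @bc_lt R d d0.
have g0 := @gam_gt0 R d; have g1 := @gam_le1 R d.
have sp1 : 1 < Num.sqrt (pi : R).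
  rewrite -sqrtr1 ltr_sqrt //; apply: lt_le_trans (pi_ge2 R); lra.
have bc0 : 0 <= bc R d.
  rewrite /bc; apply: mulr_ge0; last by rewrite invr_ge0 sqrtr_ge0.
  by apply: mulr_ge0; [exact: expR_ge0 | lra].
have C0 : 0 < C by apply: le_lt_trans hbc.
have base : (r / Num.sqrt d%:R + 2 * delta) * Num.sqrt (pi * expR 1 / 2) = C * rho0.
  by rewrite /C /rho0; field; rewrite gt_eqF.
rewrite base.
set eps := (C - bc R d) * rho0 / (4 * C).
have eps0 : 0 < eps.
  by rewrite /eps; apply: divr_gt0; [apply: mulr_gt0 => //; rewrite subr_gt0 | apply: mulr_gt0].
set rho := rho0 + 2 * eps.
have rho_pos : 0 < rho by rewrite /rho; apply: ltr_wpDr => //; rewrite mulr_ge0 // ltW.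
have key : bc R d * rho < C * rho0.
  have : bc R d * (2 * eps) < (C - bc R d) * rho0.
    rewrite /eps.
    have -> : bc R d * (2 * ((C - bc R d) * rho0 / (4 * C))) =
              ((C - bc R d) * rho0) * (bc R d / (2 * C)).
      by field; rewrite gt_eqF.
    rewrite gtr_pMr ?mulr_gt0 ?subr_gt0 //.
    rewrite ltr_pdivrMr; last exact: mulr_gt0.
    by rewrite mul1r; move: hbc C0; clearbody C; lra.
  rewrite /rho; clearbody rho0 eps C; rewrite mulrDr mulrBl; lra.
have [c hc] := happ eps eps0.
pose m i := 2^-1 *: (c + x i).
have hballs : forall i : 'I_n, exists s : seq ('rV[R]_d * 'rV[R]_d),
  [/\ (forall p, p \in s -> forall j, p.1 ord0 j <= p.2 ord0 j),
      (forall z, enorm (z - m i) <= rho -> exists2 p, p \in s & box p.1 p.2 z) &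
      \sum_(p <- s) box_vol p.1 p.2 <= (bc R d * rho) ^+ d ].
  by move=> i; exact: ball_cover.
have [f hf] := fin_all_exists hballs.
pose S := flatten [seq f i | i <- enum 'I_n].
apply: (@le_lt_trans _ _ (\sum_(p <- S) box_vol p.1 p.2)%:E).
  apply: leb_outer_seq => //.
    move=> p /flattenP[s /mapP[i _ ->] ps]; case: (hf i) => h1 _ _; exact: h1.
  move=> z hz.
  have [y [[w [w0 w1 ->]] hzy]] := thicken_approx hz eps0.
  have hxc : forall i, enorm (x i - c) <= r + eps by move=> i; exact: hc.
  have [i hi] := elekes n0 w0 w1 hxc.
  have hzm : enorm (z - m i) <= rho.
    have -> : z - m i = (z - \sum_i w i *: x i) + (\sum_i w i *: x i - 2^-1 *: (c + x i)).
      by rewrite addrA subrK.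
    apply: le_trans (enormD _ _) _.
    rewrite /rho /rho0; lra.
  case: (hf i) => _ h2 _; have [p ps bp] := h2 z hzm.
  exists p => //; apply/flattenP; exists (f i) => //.
  by apply: map_f; rewrite mem_enum.
rewrite lte_fin /S big_flatten /= big_map big_enum /=.
apply: (@le_lt_trans _ _ (\sum_(i in 'I_n) (bc R d * rho) ^+ d)).
  by apply: ler_sum => i _; case: (hf i).
rewrite sumr_const card_ord -[_ *+ n]mulr_natl ltr_pM2l ?ltr0n //.
by rewrite ltrXn2r // ?gtn_eqF // mulr_ge0 // ltW.
Qed.
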